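(* Under the hypotheses of Proposition 5.1, let $(\bar u,\bar v)$ be the branch of stationary solutions given there. Then for $\alpha>\alpha_0$ with $\alpha-\alpha_0$ small enough: in case (PBC), $\bar u>0$ and $\bar v>0$ on $[0,1]$; in case (DBC), $\bar u>0$ on $(0,1]$ and $\bar v>0$ on $[0,1)$.
   Context: System (S): $\partial_t u+\partial_x(c(x)u)=\frac{\alpha v}{1+u+v}-u$, $\partial_t v-\partial_x(c(x)v)=\frac{\alpha u}{1+u+v}-v$ on $[0,1]$, $c\in\mathcal C([0,1])$ with $0<\underline c\le c\le\overline c$. Boundary conditions (DBC) $u(0)=0,v(1)=0$ or (PBC) $u(0)=u(1),v(0)=v(1)$. Proposition 5.1: with $\alpha_0=1$ for (PBC) and $\alpha_0=1/|\cos b_0|$ for (DBC), where $b_0\in(\pi/2,\pi)$ is the smallest positive root of $Cb+\tan b=0$, $\frac1C=\int_0^1dx/c$, there is $\alpha_1>\alpha_0$ and a smooth branch $\alpha\mapsto(\bar u,\bar v)\in\mathcal C([0,1])^2$, $\alpha\in[\alpha_0,\alpha_1)$, of stationary solutions with $(\bar u,\bar v)(\alpha_0)=0$ and $\alpha$-derivative at $\alpha_0$ equal to $\frac{\kappa_1C}{\kappa_2c(x)}(\tilde U,\tilde V)(C\int_0^xdy/c)$ where $\kappa_1,\kappa_2>0$, $(\tilde U,\tilde V)=(1,1)$ for (PBC) and $(\tilde U,\tilde V)(X)=(\sin(b_0X),\sin(b_0(1-X)))$ for (DBC). *)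

(* Defs.v *)
From Stdlib Require Import Reals Lra.
Open Scope R_scope.

Inductive bc := DBC | PBC.

Definition cont01 (f : R -> R) (x : R) : Prop :=
  forall eps, 0 < eps -> exists eta, 0 < eta /\
    forall y, 0 <= y <= 1 -> Rabs (y - x) < eta -> Rabs (f y - f x) < eps.

Definition deriv01 (f : R -> R) (x l : R) : Prop :=
  forall eps, 0 < eps -> exists eta, 0 < eta /\
    forall y, 0 <= y <= 1 -> y <> x -> Rabs (y - x) < eta ->
      Rabs ((f y - f x) / (y - x) - l) < eps.

Definition stationary (c : R -> R) (alpha : R) (u v : R -> R) : Prop :=
  (forall x, 0 <= x <= 1 -> cont01 u x /\ cont01 v x) /\
  (forall x, 0 <= x <= 1 ->
     deriv01 (fun y => c y * u y) x (alpha * v x / (1 + u x + v x) - u x) /\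
     deriv01 (fun y => c y * v y) x (- (alpha * u x / (1 + u x + v x) - v x))).

Definition boundary (b : bc) (u v : R -> R) : Prop :=
  match b with
  | DBC => u 0 = 0 /\ v 1 = 0
  | PBC => u 0 = u 1 /\ v 0 = v 1
  end.

(* b is a root of  C b + tan b = 0  (tan defined, i.e. cos b <> 0) *)
Definition is_root (C b : R) : Prop := cos b <> 0 /\ C * b + tan b = 0.

Definition smallest_pos_root (C b0 : R) : Prop :=
  0 < b0 /\ is_root C b0 /\ (forall b, 0 < b < b0 -> ~ is_root C b).

Definition alpha0 (b : bc) (b0 : R) : R :=
  match b with
  | PBC => 1
  | DBC => 1 / Rabs (cos b0)
  end.

Definition Utilde (b : bc) (b0 X : R) : R :=
  match b with PBC => 1 | DBC => sin (b0 * X) end.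
Definition Vtilde (b : bc) (b0 X : R) : R :=
  match b with PBC => 1 | DBC => sin (b0 * (1 - X)) end.

(* F has derivative dF at a (as a map R -> C([0,1]) with the sup norm),
   the increments being taken within the parameter interval [a0, a1). *)
Definition sup_deriv (a0 a1 : R) (F : R -> R -> R) (a : R) (dF : R -> R) : Prop :=
  forall eps, 0 < eps -> exists eta, 0 < eta /\
    forall h, h <> 0 -> Rabs h < eta -> a0 <= a + h < a1 ->
      forall x, 0 <= x <= 1 -> Rabs ((F (a + h) x - F a x) / h - dF x) <= eps.

Definition sup_cont (a0 a1 : R) (G : R -> R -> R) (a : R) : Prop :=
  forall eps, 0 < eps -> exists eta, 0 < eta /\
    forall a', a0 <= a' < a1 -> Rabs (a' - a) < eta ->
      forall x, 0 <= x <= 1 -> Rabs (G a' x - G a x) <= eps.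

(* Main.v *)
Require Import Defs.
From Stdlib Require Import Reals Lra.
Open Scope R_scope.

Lemma abs_bnd x e : Rabs x <= e -> -e <= x <= e.
Proof. intros H. pose proof (Rle_abs x). pose proof (Rle_abs (-x)).
  rewrite Rabs_Ropp in H1. lra. Qed.

Lemma abs_bnd_lt x e : Rabs x < e -> -e < x < e.
Proof. intros H. pose proof (Rle_abs x). pose proof (Rle_abs (-x)).
  rewrite Rabs_Ropp in H1. lra. Qed.

Lemma deriv_pos_local f x l : 0 < l -> deriv01 f x l ->
  exists eta, 0 < eta /\ forall y, 0 <= y <= 1 -> Rabs (y - x) < eta ->
    (x < y -> f x < f y) /\ (y < x -> f y < f x).
Proof.
  intros Hl Hd. destruct (Hd l Hl) as [eta [Heta H]]. exists eta; split; auto.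
  intros y Hy Hyx. 
  assert (K: y <> x -> 0 < (f y - f x) / (y - x)).
  { intros Hne. specialize (H y Hy Hne Hyx). apply abs_bnd_lt in H. lra. }
  split; intros Hlt.
  - specialize (K ltac:(lra)).
    assert (0 < y - x) by lra.
    assert (0 < (f y - f x)) ; [|lra].
    replace (f y - f x) with ((f y - f x) / (y - x) * (y - x)) by (field; lra).
    apply Rmult_lt_0_compat; lra.
  - specialize (K ltac:(lra)).
    assert (0 < x - y) by lra.
    replace ((f y - f x) / (y - x)) with ((f x - f y) / (x - y)) in K by (field; lra).
    assert (0 < (f x - f y)) ; [|lra].
    replace (f x - f y) with ((f x - f y) / (x - y) * (x - y)) by (field; lra).
    apply Rmult_lt_0_compat; lra.
Qed.

Lemma mono_pos f p q : 0 <= p -> p < q -> q <= 1 ->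
  (forall x, p <= x <= q -> exists l, 0 < l /\ deriv01 f x l) -> f p < f q.
Proof.
  intros Hp Hpq Hq Hd.
  set (E := fun x => p <= x <= q /\ forall y, p < y <= x -> f p < f y).
  assert (HE : exists x, E x). { exists p. split. lra. intros; lra. }
  assert (HB : bound E). { exists q. intros x [Hx _]. lra. }
  destruct (completeness E HB HE) as [s [Hub Hlub]].
  assert (Hps : p <= s). { apply Hub. split. lra. intros; lra. }
  assert (Hsq : s <= q). { apply Hlub. intros x [Hx _]. lra. }
  assert (Hbelow : forall y, p < y < s -> f p < f y).
  { intros y Hy. destruct (Rle_lt_dec s y) as [|Hys]; [lra|].
    assert (exists x, E x /\ y < x) as [x [[Hx1 Hx2] Hyx]].
    { apply Classical_Prop.NNPP. intros Hn.
      assert (s <= y); [|lra].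
      apply Hlub. intros x Ex. destruct (Rle_lt_dec x y); auto.
      exfalso; apply Hn; eauto. }
    apply Hx2. lra. }
  destruct (Hd s ltac:(lra)) as [l [Hl Hds]].
  destruct (deriv_pos_local f s l Hl Hds) as [eta [Heta Hloc]].
  assert (Hsp : p < s).
  { destruct (Rle_lt_dec s p) as [Hsp|]; auto. exfalso.
    assert (s = p) by lra. subst s.
    set (x := Rmin q (p + eta/2)).
    assert (Hx : p < x <= q). { unfold x. apply Rmin_case_strong; intros; lra. }
    assert (Hxe : x <= p + eta/2). { unfold x. apply Rmin_r. }
    assert (E x).
    { split. lra. intros y Hy. apply (proj1 (Hloc y ltac:(lra) ltac:(rewrite Rabs_right; lra))). lra. }
    assert (x <= p) by (apply Hub; auto). lra. }
  assert (Hfs : f p < f s).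
  { set (y := Rmax ((p+s)/2) (s - eta/2)).
    assert (Hy : (p+s)/2 <= y /\ s - eta/2 <= y /\ y < s).
    { unfold y. split; [apply Rmax_l|split;[apply Rmax_r|]]. apply Rmax_case_strong; intros; lra. }
    pose proof (Hbelow y ltac:(lra)).
    pose proof (proj2 (Hloc y ltac:(lra) ltac:(rewrite Rabs_left; lra)) ltac:(lra)). lra. }
  assert (HEs : forall y, p < y <= s -> f p < f y).
  { intros y Hy. destruct (Req_dec y s). subst; auto. apply Hbelow; lra. }
  destruct (Req_dec s q) as [Heq|Hne]. { subst s. apply HEs. lra. }
  exfalso.
  set (x := Rmin q (s + eta/2)).
  assert (Hx : s < x <= q). { unfold x. apply Rmin_case_strong; intros; lra. }
  assert (Hxe : x <= s + eta/2). { unfold x. apply Rmin_r. }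
  assert (E x).
  { split. lra. intros y Hy. destruct (Rle_lt_dec y s). apply HEs; lra.
    pose proof (proj1 (Hloc y ltac:(lra) ltac:(rewrite Rabs_right; lra)) ltac:(lra)). lra. }
  assert (x <= s) by (apply Hub; auto). lra.
Qed.

Lemma deriv01_opp f x l : deriv01 f x l -> deriv01 (fun y => - f y) x (- l).
Proof.
  intros H eps Heps. destruct (H eps Heps) as [eta [He Hk]]. exists eta; split; auto.
  intros y Hy Hne Hyx. specialize (Hk y Hy Hne Hyx).
  replace ((- f y - - f x) / (y - x) - - l) with (- ((f y - f x) / (y - x) - l)) by (field; lra).
  rewrite Rabs_Ropp; auto.
Qed.

Lemma mono_neg f p q : 0 <= p -> p < q -> q <= 1 ->
  (forall x, p <= x <= q -> exists l, l < 0 /\ deriv01 f x l) -> f q < f p.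
Proof.
  intros Hp Hpq Hq Hd.
  assert (- f p < - f q); [|lra].
  apply (mono_pos (fun y => - f y)); auto.
  intros x Hx. destruct (Hd x Hx) as [l [Hl Hdl]]. exists (-l). split. lra.
  apply deriv01_opp; auto.
Qed.

Lemma deriv01_cont f x l : deriv01 f x l -> forall e, 0 < e -> exists eta, 0 < eta /\
  forall y, 0 <= y <= 1 -> Rabs (y - x) < eta -> Rabs (f y - f x) < e.
Proof.
  intros H e He. destruct (H 1 Rlt_0_1) as [eta [Heta Hk]].
  exists (Rmin eta (e / (Rabs l + 1))). split.
  { apply Rmin_case; auto. apply Rdiv_lt_0_compat; auto. pose proof (Rabs_pos l); lra. }
  intros y Hy Hyx. destruct (Req_dec y x). { subst. replace (f x - f x) with 0 by ring. rewrite Rabs_R0; auto. }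
  assert (Hyx1 : Rabs (y - x) < eta) by (eapply Rlt_le_trans; [exact Hyx| apply Rmin_l]).
  assert (Hyx2 : Rabs (y - x) < e / (Rabs l + 1)) by (eapply Rlt_le_trans; [exact Hyx| apply Rmin_r]).
  specialize (Hk y Hy H0 Hyx1).
  assert (Hq : Rabs ((f y - f x) / (y - x)) < Rabs l + 1).
  { pose proof (Rabs_triang ((f y - f x) / (y - x) - l) l).
    replace ((f y - f x) / (y - x) - l + l) with ((f y - f x) / (y - x)) in H1 by ring. lra. }
  replace (f y - f x) with ((f y - f x) / (y - x) * (y - x)) by (field; lra).
  rewrite Rabs_mult.
  assert (0 < Rabs (y - x)) by (apply Rabs_pos_lt; lra).
  pose proof (Rabs_pos l).
  apply Rlt_le_trans with ((Rabs l + 1) * Rabs (y - x)).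
  { apply Rmult_lt_compat_r; auto. }
  apply Rle_trans with ((Rabs l + 1) * (e / (Rabs l + 1))).
  { apply Rmult_le_compat_l; lra. }
  right; field; lra.
Qed.

Lemma b0_lt_PI C b0 : 0 < C -> smallest_pos_root C b0 -> b0 < PI.
Proof.
  intros HC [Hb0 [Hr Hmin]].
  set (g := fun b => - (C * b * cos b + sin b)).
  assert (Hg : continuity g).
  { unfold g. apply continuity_opp. apply continuity_plus.
    apply continuity_mult. apply continuity_mult. apply continuity_const. intros ? ?; auto.
    apply derivable_continuous, derivable_id. apply continuity_cos. apply continuity_sin. }
  assert (HP : 0 < PI) by apply PI_RGT_0.
  destruct (IVT g (PI/2) PI Hg ltac:(lra)) as [r [Hr1 Hr2]].
  { unfold g. rewrite cos_PI2, sin_PI2. lra. }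
  { unfold g. rewrite cos_PI, sin_PI. nra. }
  assert (r <> PI/2). { intro; subst. unfold g in Hr2. rewrite cos_PI2, sin_PI2 in Hr2. lra. }
  assert (r <> PI). { intro; subst. unfold g in Hr2. rewrite cos_PI, sin_PI in Hr2. nra. }
  assert (Hc : cos r < 0). { apply cos_lt_0; lra. }
  destruct (Rlt_le_dec b0 PI) as [|Hge]; auto. exfalso.
  apply (Hmin r). lra. split. lra.
  unfold tan. unfold g in Hr2.
  replace (C * r + sin r / cos r) with ((C * r * cos r + sin r) / cos r) by (field; lra).
  replace (C * r * cos r + sin r) with 0 by lra. unfold Rdiv; ring.
Qed.

Lemma sin_lower t1 t b0 : 0 < t1 -> t1 <= t -> t <= b0 -> b0 < PI ->
  Rmin (sin t1) (sin b0) <= sin t.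
Proof.
  intros H1 H2 H3 H4.
  destruct (Rle_lt_dec t (PI/2)).
  - apply Rle_trans with (sin t1). apply Rmin_l. apply sin_incr_1; lra.
  - apply Rle_trans with (sin b0). apply Rmin_r. apply sin_decr_1; lra.
Qed.

Lemma sin_pos_min t1 b0 : 0 < t1 -> t1 <= b0 -> b0 < PI -> 0 < Rmin (sin t1) (sin b0).
Proof. intros. apply Rmin_case; apply sin_gt_0; lra. Qed.

Lemma sup_deriv_bounds a0 a1 F dF : (forall x, 0 <= x <= 1 -> F a0 x = 0) ->
  a0 < a1 -> sup_deriv a0 a1 F a0 dF ->
  forall eps, 0 < eps -> exists eta, 0 < eta /\ forall h, 0 < h < eta -> a0 + h < a1 ->
    forall x, 0 <= x <= 1 -> h * (dF x - eps) <= F (a0 + h) x <= h * (dF x + eps).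
Proof.
  intros H0 Ha Hd eps He. destruct (Hd eps He) as [eta [Heta Hk]]. exists eta; split; auto.
  intros h Hh Hh1 x Hx.
  assert (Rabs h < eta) by (rewrite Rabs_right; lra).
  specialize (Hk h ltac:(lra) H ltac:(lra) x Hx). rewrite H0 in Hk; auto.
  pose proof (Rle_abs ((F (a0 + h) x - 0) / h - dF x)).
  pose proof (Rle_abs (- ((F (a0 + h) x - 0) / h - dF x))). rewrite Rabs_Ropp in H2.
  assert (Hq : (F (a0 + h) x - 0) / h = F (a0+h) x / h) by (unfold Rdiv; ring).
  rewrite Hq in H1, H2, Hk.
  assert (F (a0 + h) x = h * (F (a0+h) x / h)) by (field; lra).
  split; rewrite H3; apply Rmult_le_compat_l; lra.
Qed.

Lemma div_le_l A y z : 0 <= A -> 0 < y -> y <= z -> A / z <= A / y.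
Proof. intros. unfold Rdiv. apply Rmult_le_compat_l; auto. apply Rinv_le_contravar; auto. Qed.

Lemma key_ineq a a0 h u v mv eps : 0 < a0 -> a0 <= a -> 0 < h -> 0 < mv ->
  eps <= mv / 2 -> eps <= a0 * mv / 16 ->
  h * (mv - eps) <= v -> u <= h * (a0 * mv / 8 + eps) -> -1/2 <= u -> u + v <= 1 ->
  0 < a * v / (1 + u + v) - u.
Proof.
  intros. assert (Hv : h * mv / 2 <= v) by nra.
  assert (Hv0 : 0 < v) by nra.
  assert (HD : 1/2 <= 1 + u + v) by lra.
  assert (a * v - u * (1 + u + v) > 0).
  { destruct (Rle_lt_dec u 0).
    - assert (0 < a * v) by nra. assert (u * (1+u+v) <= 0) by nra. lra.
    - assert (u * (1 + u + v) <= 2 * u) by nra.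
      assert (u <= h * (3 * a0 * mv / 16)) by nra.
      assert (a0 * v <= a * v) by nra.
      assert (a0 * (h * mv / 2) <= a0 * v) by nra.
      nra. }
  replace (a * v / (1 + u + v) - u) with ((a * v - u * (1 + u + v)) / (1 + u + v)) by (field; lra).
  apply Rdiv_lt_0_compat; lra.
Qed.

Lemma bnds h eps M d w : 0 < h -> h * M <= 1/2 -> 0 <= eps -> 0 <= d -> d + eps <= M ->
  h * (d - eps) <= w <= h * (d + eps) -> -1/2 <= w <= 1/2.
Proof. intros. assert (h * (d + eps) <= h * M) by (apply Rmult_le_compat_l; lra).
  assert (h * (- M) <= h * (d - eps)) by (apply Rmult_le_compat_l; lra). lra. Qed.

Lemma lb_mono h d m eps w : 0 < h -> m <= d -> h * (d - eps) <= w -> h * (m - eps) <= w.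
Proof. intros. assert (h * (m - eps) <= h * (d - eps)) by (apply Rmult_le_compat_l; lra). lra. Qed.

Lemma ub_mono h d m eps w : 0 < h -> d <= m -> w <= h * (d + eps) -> w <= h * (m + eps).
Proof. intros. assert (h * (d + eps) <= h * (m + eps)) by (apply Rmult_le_compat_l; lra). lra. Qed.

Theorem lemma5p2
  (b : bc) (c : R -> R) (cl cu : R)
  (Hc_cont : forall x, 0 <= x <= 1 -> cont01 c x)
  (Hcl : 0 < cl)
  (Hc_bnd : forall x, 0 <= x <= 1 -> cl <= c x <= cu)
  (* P x = int_0^x dy / c(y), C = 1 / P 1 *)
  (P : R -> R) (HP0 : P 0 = 0)
  (HP' : forall x, 0 <= x <= 1 -> deriv01 P x (1 / c x))
  (b0 : R) (Hb0 : b = DBC -> smallest_pos_root (1 / P 1) b0)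
  (kappa1 kappa2 alpha1 : R) (Hk1 : 0 < kappa1) (Hk2 : 0 < kappa2)
  (Ha1 : alpha0 b b0 < alpha1)
  (* the branch alpha |-> (ubar alpha, vbar alpha) of Proposition 5.1 *)
  (ubar vbar du dv : R -> R -> R)
  (Hstat : forall a, alpha0 b b0 <= a < alpha1 ->
     stationary c a (ubar a) (vbar a) /\ boundary b (ubar a) (vbar a))
  (Hzero : forall x, 0 <= x <= 1 -> ubar (alpha0 b b0) x = 0 /\ vbar (alpha0 b b0) x = 0)
  (Hdiff : forall a, alpha0 b b0 <= a < alpha1 ->
     sup_deriv (alpha0 b b0) alpha1 ubar a (du a) /\
     sup_deriv (alpha0 b b0) alpha1 vbar a (dv a))
  (HC1 : forall a, alpha0 b b0 <= a < alpha1 ->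
     sup_cont (alpha0 b b0) alpha1 du a /\ sup_cont (alpha0 b b0) alpha1 dv a)
  (Hder0 : forall x, 0 <= x <= 1 ->
     du (alpha0 b b0) x
       = kappa1 * (1 / P 1) / (kappa2 * c x) * Utilde b b0 ((1 / P 1) * P x) /\
     dv (alpha0 b b0) x
       = kappa1 * (1 / P 1) / (kappa2 * c x) * Vtilde b b0 ((1 / P 1) * P x)) :
  exists delta, 0 < delta /\ delta <= alpha1 - alpha0 b b0 /\
    forall a, alpha0 b b0 < a < alpha0 b b0 + delta ->
      match b with
      | PBC => forall x, 0 <= x <= 1 -> 0 < ubar a x /\ 0 < vbar a x
      | DBC => (forall x, 0 < x <= 1 -> 0 < ubar a x) /\
               (forall x, 0 <= x < 1 -> 0 < vbar a x)
      end.
Proof.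
  assert (Hcpos : forall x, 0 <= x <= 1 -> 0 < c x).
  { intros x Hx. specialize (Hc_bnd x Hx). lra. }
  assert (Hcu : 0 < cu). { specialize (Hc_bnd 0 ltac:(lra)). lra. }
  assert (HPd : forall x, 0 <= x <= 1 -> exists l, 0 < l /\ deriv01 P x l).
  { intros x Hx. exists (1 / c x). split. apply Rdiv_lt_0_compat. lra. auto. auto. }
  assert (HPlt : forall x y, 0 <= x -> x < y -> y <= 1 -> P x < P y).
  { intros x y Hx Hxy Hy. apply mono_pos; auto. intros z Hz. apply HPd. lra. }
  assert (HPle : forall x y, 0 <= x -> x <= y -> y <= 1 -> P x <= P y).
  { intros x y Hx Hxy Hy. destruct (Req_dec x y). subst; lra. left; apply HPlt; lra. }
  assert (HP1 : 0 < P 1). { rewrite <- HP0. apply HPlt; lra. }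
  set (C := 1 / P 1) in *.
  assert (HC : 0 < C). { unfold C. apply Rdiv_lt_0_compat; lra. }
  assert (HX : forall x, 0 <= x <= 1 -> 0 <= C * P x <= 1).
  { intros x Hx. pose proof (HPle 0 x ltac:(lra) ltac:(lra) ltac:(lra)).
    pose proof (HPle x 1 ltac:(lra) ltac:(lra) ltac:(lra)).
    unfold C. split. apply Rmult_le_pos. left; auto. lra.
    replace (1 / P 1 * P x) with (P x / P 1) by (field; lra).
    apply (Rmult_le_reg_r (P 1)); auto. replace (P x / P 1 * P 1) with (P x) by (field; lra). lra. }
  set (K := kappa1 * C / kappa2).
  assert (HK : 0 < K). { unfold K. apply Rdiv_lt_0_compat; auto. apply Rmult_lt_0_compat; auto. }
  assert (HKe : forall x, 0 <= x <= 1 -> kappa1 * C / (kappa2 * c x) = K / c x).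
  { intros x Hx. unfold K. specialize (Hcpos x Hx). field. lra. }
  set (a0 := alpha0 b b0) in *.
  assert (HBu : forall eps, 0 < eps -> exists eta, 0 < eta /\ forall h, 0 < h < eta -> a0 + h < alpha1 ->
    forall x, 0 <= x <= 1 -> h * (du a0 x - eps) <= ubar (a0 + h) x <= h * (du a0 x + eps)).
  { apply sup_deriv_bounds; auto. intros x Hx; apply (Hzero x Hx). apply (Hdiff a0 ltac:(lra)). }
  assert (HBv : forall eps, 0 < eps -> exists eta, 0 < eta /\ forall h, 0 < h < eta -> a0 + h < alpha1 ->
    forall x, 0 <= x <= 1 -> h * (dv a0 x - eps) <= vbar (a0 + h) x <= h * (dv a0 x + eps)).
  { apply sup_deriv_bounds; auto. intros x Hx; apply (Hzero x Hx). apply (Hdiff a0 ltac:(lra)). }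
  destruct b.
  -
    specialize (Hb0 eq_refl). pose proof (b0_lt_PI C b0 HC Hb0) as Hb0PI.
    destruct Hb0 as [Hb0pos [[Hcos _] _]].
    assert (Ha0 : 0 < a0).
    { unfold a0; simpl. apply Rdiv_lt_0_compat. lra. apply Rabs_pos_lt; auto. }
    assert (HduE : forall x, 0 <= x <= 1 -> du a0 x = K / c x * sin (b0 * (C * P x))).
    { intros x Hx. destruct (Hder0 x Hx) as [E _]. rewrite E, HKe; auto. }
    assert (HdvE : forall x, 0 <= x <= 1 -> dv a0 x = K / c x * sin (b0 * (1 - C * P x))).
    { intros x Hx. destruct (Hder0 x Hx) as [_ E]. rewrite E, HKe; auto. }
    assert (Hsin01 : forall X, 0 <= X <= 1 -> 0 <= sin (b0 * X) <= 1).
    { intros X HX0. split. apply sin_ge_0. apply Rmult_le_pos; lra.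
      apply Rle_trans with (b0 * 1). apply Rmult_le_compat_l; lra. lra. apply SIN_bound. }
    assert (HKc : forall x, 0 <= x <= 1 -> 0 < K / c x <= K / cl).
    { intros x Hx. split. apply Rdiv_lt_0_compat; auto. apply div_le_l; try lra. apply Hc_bnd; auto. }
    assert (HKc2 : forall x, 0 <= x <= 1 -> K / cu <= K / c x).
    { intros x Hx. apply div_le_l; try lra. apply Hcpos; auto. apply Hc_bnd; auto. }
    assert (HduB : forall x, 0 <= x <= 1 -> 0 <= du a0 x <= K / cl).
    { intros x Hx. rewrite HduE; auto. destruct (HKc x Hx). destruct (Hsin01 (C * P x) (HX x Hx)).
      split. nra. nra. }
    assert (HdvB : forall x, 0 <= x <= 1 -> 0 <= dv a0 x <= K / cl).
    { intros x Hx. rewrite HdvE; auto. destruct (HKc x Hx). pose proof (HX x Hx).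
      destruct (Hsin01 (1 - C * P x) ltac:(lra)). split. nra. nra. }
    set (s2 := Rmin (sin (b0 / 2)) (sin b0)).
    assert (Hs2 : 0 < s2) by (apply sin_pos_min; lra).
    set (mv := K * s2 / cu).
    assert (Hmv : 0 < mv) by (unfold mv; apply Rdiv_lt_0_compat; auto; apply Rmult_lt_0_compat; auto).
    set (dX := Rmin (1/2) (a0 * mv * cl / (8 * K * b0))).
    assert (HdX : 0 < dX).
    { apply Rmin_pos. lra. apply Rdiv_lt_0_compat.
      apply Rmult_lt_0_compat; [apply Rmult_lt_0_compat|]; assumption.
      apply Rmult_lt_0_compat; [apply Rmult_lt_0_compat|]; lra. }
    assert (HdX2 : dX <= 1/2) by apply Rmin_l.
    assert (HdX3 : dX <= a0 * mv * cl / (8 * K * b0)) by apply Rmin_r.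
    assert (Hlow : forall X, 1/2 <= X <= 1 -> s2 <= sin (b0 * X)).
    { intros X HX0. apply sin_lower; nra. }
    assert (Hlowm : forall x X s, 0 <= x <= 1 -> 0 <= s -> s <= sin (b0 * X) -> K * s / cu <= K / c x * sin (b0 * X)).
    { intros x X s Hx Hs Hss. replace (K * s / cu) with (K / cu * s) by (field; lra).
      apply Rmult_le_compat; auto. left; apply Rdiv_lt_0_compat; auto. }
    assert (Hup : forall x X, 0 <= x <= 1 -> 0 <= X <= dX -> K / c x * sin (b0 * X) <= a0 * mv / 8).
    { intros x X Hx HX0. destruct (HKc x Hx).
      assert (Hs : sin (b0 * X) <= b0 * X).
      { destruct (Req_dec X 0). subst. rewrite Rmult_0_r, sin_0. lra.
        left. apply sin_lt_x. apply Rmult_lt_0_compat; lra. }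
      assert (0 <= sin (b0 * X)) by (apply (Hsin01 X); lra).
      apply Rle_trans with (K / cl * (b0 * X)). apply Rmult_le_compat; lra.
      apply Rle_trans with (K / cl * (b0 * (a0 * mv * cl / (8 * K * b0)))).
      { apply Rmult_le_compat_l. lra. apply Rmult_le_compat_l; lra. }
      right. field. repeat split; lra. }
    assert (HdP : 0 < dX * P 1) by (apply Rmult_lt_0_compat; auto).
    destruct (deriv01_cont P 0 _ (HP' 0 ltac:(lra)) (dX * P 1) HdP) as [e0 [He0 Hc0]].
    destruct (deriv01_cont P 1 _ (HP' 1 ltac:(lra)) (dX * P 1) HdP) as [e1 [He1 Hc1]].
    set (x1 := Rmin (1/2) (e0/2)).
    assert (Hx1 : 0 < x1 <= 1/2 /\ x1 < e0).
    { unfold x1. split. split. apply Rmin_pos; lra. apply Rmin_l.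
      apply Rle_lt_trans with (e0/2). apply Rmin_r. lra. }
    set (x2 := 1 - Rmin (1/2) (e1/2)).
    assert (Hx2 : 1/2 <= x2 < 1 /\ 1 - x2 < e1).
    { unfold x2. pose proof (Rmin_l (1/2) (e1/2)). pose proof (Rmin_r (1/2) (e1/2)).
      pose proof (Rmin_pos (1/2) (e1/2) ltac:(lra) ltac:(lra)). lra. }
    assert (HCP : forall x, C * P x = P x / P 1) by (intros; unfold C; field; lra).
    assert (HX1 : 0 < C * P x1 < dX).
    { rewrite HCP. split. apply Rdiv_lt_0_compat; auto. rewrite <- HP0. apply HPlt; lra.
      assert (Rabs (x1 - 0) < e0) by (rewrite Rabs_right; lra).
      specialize (Hc0 x1 ltac:(lra) H). rewrite HP0, Rminus_0_r in Hc0. apply abs_bnd_lt in Hc0.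
      apply (Rmult_lt_reg_r (P 1)); auto. replace (P x1 / P 1 * P 1) with (P x1) by (field; lra). lra. }
    assert (HY2 : 0 < 1 - C * P x2 < dX).
    { rewrite HCP. pose proof (HPlt x2 1 ltac:(lra) ltac:(lra) ltac:(lra)).
      assert (Rabs (x2 - 1) < e1) by (rewrite Rabs_left; lra).
      specialize (Hc1 x2 ltac:(lra) H0). apply abs_bnd_lt in Hc1.
      replace (1 - P x2 / P 1) with ((P 1 - P x2) / P 1) by (field; lra).
      split. apply Rdiv_lt_0_compat; lra.
      apply (Rmult_lt_reg_r (P 1)); auto. replace ((P 1 - P x2) / P 1 * P 1) with (P 1 - P x2) by (field; lra). lra. }
    set (mu1 := K * Rmin (sin (b0 * (C * P x1))) (sin b0) / cu).
    set (mv2 := K * Rmin (sin (b0 * (1 - C * P x2))) (sin b0) / cu).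
    assert (Hmu1 : 0 < mu1).
    { unfold mu1. apply Rdiv_lt_0_compat; auto. apply Rmult_lt_0_compat; auto. apply sin_pos_min; nra. }
    assert (Hmv2 : 0 < mv2).
    { unfold mv2. apply Rdiv_lt_0_compat; auto. apply Rmult_lt_0_compat; auto. apply sin_pos_min; nra. }
    set (eps := Rmin (Rmin (mv/2) (a0*mv/16)) (Rmin (mu1/2) (mv2/2))).
    assert (Heps : 0 < eps).
    { apply Rmin_pos; apply Rmin_pos; try lra. apply Rdiv_lt_0_compat; nra. }
    assert (Heps1 : eps <= mv/2 /\ eps <= a0*mv/16 /\ eps <= mu1/2 /\ eps <= mv2/2).
    { unfold eps. pose proof (Rmin_l (Rmin (mv/2) (a0*mv/16)) (Rmin (mu1/2) (mv2/2))).
      pose proof (Rmin_r (Rmin (mv/2) (a0*mv/16)) (Rmin (mu1/2) (mv2/2))).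
      pose proof (Rmin_l (mv/2) (a0*mv/16)). pose proof (Rmin_r (mv/2) (a0*mv/16)).
      pose proof (Rmin_l (mu1/2) (mv2/2)). pose proof (Rmin_r (mu1/2) (mv2/2)). lra. }
    set (M := K / cl + eps).
    assert (HM : 0 < M) by (unfold M; pose proof (Rdiv_lt_0_compat K cl HK Hcl); lra).
    destruct (HBu eps Heps) as [eu [Heu Hu]].
    destruct (HBv eps Heps) as [ev [Hev Hv]].
    exists (Rmin (Rmin eu ev) (Rmin (alpha1 - a0) (1 / (2 * M)))). split.
    { apply Rmin_pos. apply Rmin_pos; auto. apply Rmin_pos. lra. apply Rdiv_lt_0_compat; lra. }
    split. { eapply Rle_trans. apply Rmin_r. apply Rmin_l. }
    intros a Ha.
    pose proof (Rmin_l (Rmin eu ev) (Rmin (alpha1 - a0) (1 / (2 * M)))).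
    pose proof (Rmin_r (Rmin eu ev) (Rmin (alpha1 - a0) (1 / (2 * M)))).
    pose proof (Rmin_l eu ev). pose proof (Rmin_r eu ev).
    pose proof (Rmin_l (alpha1 - a0) (1 / (2 * M))). pose proof (Rmin_r (alpha1 - a0) (1 / (2 * M))).
    set (h := a - a0). replace a with (a0 + h) by (unfold h; ring).
    assert (Hh : 0 < h) by (unfold h; lra).
    assert (HhM : h * M <= 1/2).
    { assert (h <= 1 / (2 * M)) by (unfold h; lra).
      apply Rle_trans with (1 / (2 * M) * M). apply Rmult_le_compat_r; lra. right; field; lra. }
    specialize (Hu h ltac:(unfold h; lra) ltac:(unfold h; lra)).
    specialize (Hv h ltac:(unfold h; lra) ltac:(unfold h; lra)).
    destruct (Hstat (a0 + h) ltac:(unfold h; lra)) as [[_ Hst] [Hbu Hbv]].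
    assert (HepsM : eps <= M) by (unfold M; pose proof (Rdiv_lt_0_compat K cl HK Hcl); lra).
    split.
    + intros x Hx. destruct (Rle_lt_dec x1 x) as [Hxx|Hxx].
      * assert (HCx : C * P x1 <= C * P x) by (apply Rmult_le_compat_l; [lra| apply HPle; lra]).
        pose proof (HX x ltac:(lra)).
        assert (mu1 <= du a0 x).
        { rewrite HduE by lra. apply Hlowm. lra. left; apply sin_pos_min; nra.
          apply sin_lower; nra. }
        destruct (Hu x ltac:(lra)). nra.
      * assert (Hf : c 0 * ubar (a0 + h) 0 < c x * ubar (a0 + h) x).
        { apply (mono_pos (fun y => c y * ubar (a0 + h) y)); try lra.
          intros y Hy. eexists. split; [| apply (Hst y ltac:(lra))].
          assert (HCy : C * P y <= C * P x1) by (apply Rmult_le_compat_l; [lra| apply HPle; lra]).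
          pose proof (HX y ltac:(lra)).
          assert (mv <= dv a0 y).
          { rewrite HdvE by lra. apply Hlowm. lra. lra. apply Hlow. lra. }
          assert (du a0 y <= a0 * mv / 8). { rewrite HduE by lra. apply Hup; lra. }
          destruct (HduB y ltac:(lra)). destruct (HdvB y ltac:(lra)).
          destruct (Hu y ltac:(lra)). destruct (Hv y ltac:(lra)).
          pose proof (bnds h eps M (du a0 y) (ubar (a0 + h) y) Hh HhM ltac:(lra) ltac:(lra) ltac:(unfold M; lra) ltac:(split; assumption)).
          pose proof (bnds h eps M (dv a0 y) (vbar (a0 + h) y) Hh HhM ltac:(lra) ltac:(lra) ltac:(unfold M; lra) ltac:(split; assumption)).
          apply (key_ineq _ a0 h _ _ mv eps); try lra.
          eapply lb_mono; eauto. eapply ub_mono; eauto. }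
        rewrite Hbu, Rmult_0_r in Hf. pose proof (Hcpos x ltac:(lra)).
        destruct (Rle_lt_dec (ubar (a0 + h) x) 0); auto. nra.
    + intros x Hx. destruct (Rle_lt_dec x x2) as [Hxx|Hxx].
      * assert (HCx : C * P x <= C * P x2) by (apply Rmult_le_compat_l; [lra| apply HPle; lra]).
        pose proof (HX x ltac:(lra)).
        assert (mv2 <= dv a0 x).
        { rewrite HdvE by lra. apply Hlowm. lra. left; apply sin_pos_min; nra.
          apply sin_lower; nra. }
        destruct (Hv x ltac:(lra)). nra.
      * assert (Hf : c 1 * vbar (a0 + h) 1 < c x * vbar (a0 + h) x).
        { apply (mono_neg (fun y => c y * vbar (a0 + h) y)); try lra.
          intros y Hy. eexists. split; [| apply (Hst y ltac:(lra))].
          assert (HCy : C * P x2 <= C * P y) by (apply Rmult_le_compat_l; [lra| apply HPle; lra]).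
          pose proof (HX y ltac:(lra)).
          assert (mv <= du a0 y).
          { rewrite HduE by lra. apply Hlowm. lra. lra. apply Hlow. lra. }
          assert (dv a0 y <= a0 * mv / 8). { rewrite HdvE by lra. apply Hup; lra. }
          destruct (HduB y ltac:(lra)). destruct (HdvB y ltac:(lra)).
          destruct (Hu y ltac:(lra)). destruct (Hv y ltac:(lra)).
          assert (0 < (a0 + h) * ubar (a0 + h) y / (1 + vbar (a0 + h) y + ubar (a0 + h) y) - vbar (a0 + h) y).
          { pose proof (bnds h eps M (du a0 y) (ubar (a0 + h) y) Hh HhM ltac:(lra) ltac:(lra) ltac:(unfold M; lra) ltac:(split; assumption)).
            pose proof (bnds h eps M (dv a0 y) (vbar (a0 + h) y) Hh HhM ltac:(lra) ltac:(lra) ltac:(unfold M; lra) ltac:(split; assumption)).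
            apply (key_ineq _ a0 h _ _ mv eps); try lra.
            eapply lb_mono; eauto. eapply ub_mono; eauto. }
          replace (1 + ubar (a0 + h) y + vbar (a0 + h) y) with (1 + vbar (a0 + h) y + ubar (a0 + h) y) by ring.
          lra. }
        rewrite Hbv, Rmult_0_r in Hf. pose proof (Hcpos x ltac:(lra)).
        destruct (Rle_lt_dec (vbar (a0 + h) x) 0); auto. nra.
  -
    assert (Ha0 : a0 = 1) by reflexivity.
    set (m := K / cu).
    assert (Hm : 0 < m) by (unfold m; apply Rdiv_lt_0_compat; auto).
    assert (Hdu : forall x, 0 <= x <= 1 -> m <= du a0 x /\ m <= dv a0 x).
    { intros x Hx. destruct (Hder0 x Hx) as [E1 E2]. rewrite E1, E2, HKe; auto. simpl.
      rewrite Rmult_1_r. unfold m. split; apply div_le_l; try lra; try apply Hcpos; auto; apply Hc_bnd; auto. }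
    destruct (HBu (m/2) ltac:(lra)) as [eu [Heu Hu]].
    destruct (HBv (m/2) ltac:(lra)) as [ev [Hev Hv]].
    exists (Rmin (Rmin eu ev) (alpha1 - a0)). split.
    { apply Rmin_pos. apply Rmin_pos; auto. lra. }
    split. { apply Rmin_r. }
    intros a Ha.
    pose proof (Rmin_l (Rmin eu ev) (alpha1 - a0)). pose proof (Rmin_r (Rmin eu ev) (alpha1 - a0)).
    pose proof (Rmin_l eu ev). pose proof (Rmin_r eu ev).
    set (h := a - a0). replace a with (a0 + h) by (unfold h; ring).
    intros x Hx. destruct (Hdu x Hx).
    specialize (Hu h ltac:(unfold h; lra) ltac:(unfold h; lra) x Hx).
    specialize (Hv h ltac:(unfold h; lra) ltac:(unfold h; lra) x Hx).
    assert (0 < h) by (unfold h; lra).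
    split; nra.
Qed.
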